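(* Let $(X,\mathcal{C})$ be a separable convexity space with Radon number at most $r$, let $E$ be a non-empty finite set, and let $m\ge 2$ be an integer. For any family of functions $f_1,\dots,f_m$ with $f_i:E\to X$ and $\bigcap_{i=1}^m\mathrm{conv}(f_i(E))=\emptyset$, there exist a subset $E_0\subset E$ with $|E_0|\ge\frac{1}{r-1}|E|$, indices $i,j$, and a halfspace $\gamma\in\mathcal{C}$ such that $f_i(E_0)\subset\gamma$ and $f_j(E_0)\subset X\setminus\gamma$.
   Context: A convexity space $(X,\mathcal{C})$ is a non-empty set $X$ with $\mathcal{C}\subset 2^X$ such that: $\emptyset, X\in\mathcal{C}$; $\mathcal{C}$ is closed under intersections of non-empty subfamilies; and $\mathcal{C}$ is closed under unions of non-empty subfamilies totally ordered by inclusion. Members of $\mathcal{C}$ are convex sets; $\mathrm{conv}(Y)$ is the intersection of all convex sets containing $Y$. The Radon number is the smallest $n$ such that every $Y\subset X$ with $|Y|=n$ has a partition $Y=A\cup B$ with $\mathrm{conv}(A)\cap\mathrm{conv}(B)\neq\emptyset$. A halfspace is $\gamma\in\mathcal{C}$ with $X\setminus\gamma\in\mathcal{C}$. The space is separable if for every $S\in\mathcal{C}$ and $x\in X\setminus S$ there is a halfspace $\gamma$ with $S\subset\gamma$ and $x\notin\gamma$. *)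

(* Defs.v *)
From mathcomp Require Import all_boot.
From mathcomp Require Import boolp classical_sets.
Set Implicit Arguments. Unset Strict Implicit. Unset Printing Implicit Defensive.
Local Open Scope classical_set_scope.

Definition chain_by_inclusion (X : Type) (F : set (set X)) :=
  forall A B, F A -> F B -> A `<=` B \/ B `<=` A.

Definition convexity_space (X : Type) (C : set (set X)) : Prop :=
  [/\ C set0, C setT,
      (forall F : set (set X), F !=set0 -> F `<=` C -> C (\bigcap_(A in F) A))
    & (forall F : set (set X), F !=set0 -> F `<=` C -> chain_by_inclusion F ->
         C (\bigcup_(A in F) A))].

Definition conv (X : Type) (C : set (set X)) (Y : set X) : set X :=
  \bigcap_(A in [set A | C A /\ Y `<=` A]) A.

(* every n-element subset Y of X (given as the image of an injective
   y : 'I_n -> X) has a partition Y = A u B (A = y(P), B = y(complement P))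
   with conv A and conv B intersecting *)
Definition radon_property (X : Type) (C : set (set X)) (n : nat) : Prop :=
  forall y : 'I_n -> X, injective y ->
    exists P : {set 'I_n},
      conv C (y @` [set i | i \in P]) `&` conv C (y @` [set i | i \notin P]) !=set0.

Definition radon_number_le (X : Type) (C : set (set X)) (r : nat) : Prop :=
  exists n, (n <= r)%N /\ radon_property C n.

Definition halfspace (X : Type) (C : set (set X)) (g : set X) : Prop :=
  C g /\ C (~` g).

Definition separable (X : Type) (C : set (set X)) : Prop :=
  forall (S : set X) (x : X), C S -> ~ S x ->
    exists g, halfspace C g /\ S `<=` g /\ ~ g x.

(* Main.v *)
Require Import Defs.
From mathcomp Require Import all_boot.
From mathcomp Require Import boolp classical_sets zify.

Lemma card_bigcup_le (T I : finType) (S0 : {set I}) (F : I -> {set T}) :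
  (#|\bigcup_(i in S0) F i| <= \sum_(i in S0) #|F i|)%N.
Proof.
elim/big_rec2: _ => [|i U n _ IH]; first by rewrite cards0.
apply: leq_trans (leq_card_setU _ _).1 _; by rewrite leq_add2l.
Qed.

Local Open Scope classical_set_scope.

Section Aux.
Variables (X : Type) (C : set (set X)).
Hypothesis HC : convexity_space C.

Lemma conv_convex Y : C (conv C Y).
Proof.
case: HC => _ HT Hcap _; apply: Hcap.
- by exists setT; split.
- by move=> A [].
Qed.

Lemma sub_conv Y : Y `<=` conv C Y.
Proof. by move=> y Yy A [_ YA]; exact: YA. Qed.

Lemma conv_min Y A : C A -> Y `<=` A -> conv C Y `<=` A.
Proof. by move=> CA YA y; apply; split. Qed.

Lemma conv_mono Y Z : Y `<=` Z -> conv C Y `<=` conv C Z.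
Proof.
move=> YZ; apply: conv_min; first exact: conv_convex.
by apply: subset_trans YZ _; exact: sub_conv.
Qed.

Lemma radon_mono n : radon_property C n -> forall k, (n <= k)%N -> radon_property C k.
Proof.
move=> Hn k; elim: k => [|k IH]; first by rewrite leqn0 => /eqP <-.
rewrite leq_eqVlt => /orP [/eqP <- //|]; rewrite ltnS => /IH {}IH.
move=> y yinj.
have yinj' : injective (fun i : 'I_k => y (widen_ord (leqnSn k) i)).
  by move=> a b /yinj /(congr1 val) /= ab; apply: val_inj.
have [P [p [Pp1 Pp2]]] := IH _ yinj'.
exists (widen_ord (leqnSn k) @: P); exists p; split.
- apply: conv_mono Pp1 => _ [i /= iP <-]; exists (widen_ord (leqnSn k) i) => //=.
  exact: imset_f.
- apply: conv_mono Pp2 => _ [i /= iP <-]; exists (widen_ord (leqnSn k) i) => //=.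
  apply/negP => /imsetP [j jP /(congr1 val) /= ij].
  by move: iP; rewrite (_ : i = j) ?jP //; apply: val_inj.
Qed.


Lemma helly (s : nat) (x0 : X) (Hrad : forall k, (s < k)%N -> radon_property C k)
  (I : finType) (A : I -> set X) (HA : forall i, C (A i)) (S : {set I}) :
  (forall S0 : {set I}, S0 \subset S -> (#|S0| <= s)%N ->
     exists x, forall i, i \in S0 -> A i x) ->
  exists x, forall i, i \in S -> A i x.
Proof.
have [k leSk] := ubnP #|S|; elim: k S leSk => // k IHk S leSk.
move=> Hsub.
have [Ss|sS] := leqP #|S| s; first exact: Hsub.
have Hxs : forall l, exists x, l \in S -> forall i, i \in S :\ l -> A i x.
  move=> l; have [lS|lS] := boolP (l \in S); last by exists x0.
  have [||x Hx] := IHk (S :\ l).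
  - by move: leSk; rewrite (cardsD1 l S) lS.
  - move=> S0 S0S S0s; apply: Hsub S0s; exact: (fintype.subset_trans S0S (subsetDl _ _)).
  by exists x.
have [xs Hxs'] := choice Hxs.
case: (EM (exists a b, [/\ a \in S, b \in S, a != b & xs a = xs b])).
  move=> [a [b [aS bS ab eab]]]; exists (xs a) => i iS.
  have [ia|ia] := eqVneq i a.
    rewrite eab; apply: (Hxs' b bS i); by rewrite !inE iS andbT ia.
  by apply: (Hxs' a aS i); rewrite !inE iS andbT ia.
move=> Hninj.
pose y (q : 'I_#|S|) := xs (enum_val q).
have yinj : injective y.
  move=> a b yab; apply: enum_val_inj; apply/eqP; apply/negPn/negP => ab.
  by apply: Hninj; exists (enum_val a), (enum_val b); split => //; exact: enum_valP.
have [P [p [Pp1 Pp2]]] := Hrad _ sS y yinj.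
exists p => l lS.
pose kl := enum_rank_in lS l.
have ekl : enum_val kl = l by rewrite enum_rankK_in.
have key : forall Q : set 'I_#|S|, ~ Q kl -> conv C (y @` Q) `<=` A l.
  move=> Q nQ; apply: (@conv_min _ _ (HA l)).
  move=> _ [q Qq <-]; apply: (Hxs' _ (enum_valP q)).
  rewrite !inE lS andbT -ekl; apply/negP => /eqP /enum_val_inj qk.
  by apply: nQ; rewrite qk.
have [klP|klP] := boolP (kl \in P).
  by apply: (key _ _ _ Pp2) => /=; rewrite klP.
by apply: (key _ _ _ Pp1) => /=; apply/negP.
Qed.

End Aux.

Theorem lemma3p1 (X : Type) (C : set (set X)) (r : nat)
  (HC : convexity_space C) (Hsep : separable C) (Hr : radon_number_le C r)
  (E : finType) (HE : (0 < #|E|)%N) (m : nat) (Hm : (2 <= m)%N)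
  (f : 'I_m -> E -> X)
  (Hempty : \bigcap_(i in [set: 'I_m]) conv C (range (f i)) = set0) :
  exists (E0 : {set E}) (i j : 'I_m) (g : set X),
    [/\ (#|E| <= (r - 1) * #|E0|)%N, halfspace C g,
        f i @` [set e | e \in E0] `<=` g
      & f j @` [set e | e \in E0] `<=` ~` g].
Proof.
have [e0 _] := card_gt0P HE.
have m0 : (0 < m)%N by apply: leq_trans Hm.
pose j := Ordinal m0.
case: Hr => n [nr Hn].
set s := (r - 1)%N.
have Hrad : forall k, (s < k)%N -> radon_property C k.
  move=> k sk; apply: (@radon_mono _ _ HC _ Hn); rewrite /s in sk; lia.
pose Big := finset (fun T : {set E} => (s * #|~: T| < #|E|)%N).
have Hcp : forall S0 : {set {set E}}, S0 \subset Big -> (#|S0| <= s)%N ->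
    exists x, forall T, T \in S0 -> conv C (f j @` [set e | e \in T]) x.
  move=> S0 S0B S0s.
  have Hsum : (\sum_(T in S0) #|~: T| < #|E|)%N.
    have [S0e|[T0 T0S]] := set_0Vmem S0.
      by rewrite S0e big_set0.
    have sp : (0 < s)%N.
      apply: leq_trans S0s; apply/card_gt0P; by exists T0.
    rewrite -(ltn_pmul2l sp) big_distrr /=.
    apply: (@leq_ltn_trans (\sum_(T in S0) (#|E|.-1))).
      apply: leq_sum => T TS0; have := fintype.subsetP S0B T TS0; rewrite inE; lia.
    rewrite sum_nat_const; apply: (leq_ltn_trans (leq_mul S0s (leqnn _))).
    by rewrite ltn_pmul2l // ltn_predL.
  set U := (\bigcup_(T in S0) ~: T)%SET.
  have [e eU] : exists e, e \notin U.
    case: (EM (exists e, e \notin U)) => // Hno.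
    have : (#|E| <= #|U|)%N.
      rewrite -cardsT; apply: subset_leq_card; apply/fintype.subsetP => e _.
      by apply/negPn/negP => eU; apply: Hno; exists e.
    have := @card_bigcup_le _ _ S0 (fun T => ~: T); rewrite -/U; lia.
  exists (f j e) => T TS0; apply: sub_conv; exists e => //=.
  apply/negPn/negP => eT; move/negP: eU; apply; apply/bigcupP; exists T => //.
  by rewrite inE.
have [x Hx] := @helly X C s (f j e0) Hrad {set E}
  (fun T => conv C (f j @` [set e | e \in T])) (fun T => @conv_convex _ _ HC _) Big Hcp.
have [i ni] : exists i, ~ conv C (range (f i)) x.
  case: (EM (exists i, ~ conv C (range (f i)) x)) => // Hno.
  have : (\bigcap_(i in [set: 'I_m]) conv C (range (f i))) x.
    by move=> i _; apply: contrapT => ni; apply: Hno; exists i.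
  by rewrite Hempty.
have [g [hg [subg ngx]]] := Hsep _ x (@conv_convex _ _ HC _) ni.
pose E0 := finset (fun e => `[< ~ g (f j e) >]).
have [big|small] := leqP #|E| (s * #|E0|).
  exists E0, i, j, g; split => //.
  - by move=> _ [e _ <-]; apply: subg; apply: sub_conv; exists e.
  - by move=> _ [e eE0 <-]; move: eE0 => /=; rewrite inE => /asboolP.
exfalso; apply: ngx.
have TB : ~: E0 \in Big by rewrite inE finset.setCK.
have := Hx _ TB; apply: (@conv_min _ _ _ _ hg.1).
move=> _ [e eE0 <-]; move: eE0 => /=; rewrite !inE => /asboolPn; exact: contrapT.
Qed.
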